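(* Assume the following two hypotheses. (Grimm's conjecture) For all integers $n\ge 1$ and $k\ge 1$ such that $n+1,\dots,n+k$ are all composite, there exist distinct primes $P_1,\dots,P_k$ with $P_i\mid (n+i)$ for $1\le i\le k$. (Smooth numbers in short intervals) For every $\varepsilon>0$ there is a constant $c_\varepsilon>0$ such that for all sufficiently large real $x$, $\Psi(x+x^{\varepsilon},x^{\varepsilon})-\Psi(x,x^{\varepsilon})\ge c_\varepsilon x^{\varepsilon}$. Then for every $\varepsilon>0$, $p_{i+1}-p_i<p_i^{\varepsilon}$ for all sufficiently large $i$.
   Context: $p_i$ denotes the $i$-th prime. For real $x,y$, $\Psi(x,y)$ denotes the number of positive integers $\le x$ all of whose prime factors are $\le y$. *)

(* Defs.v *)
From mathcomp Require Import all_boot.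
From Stdlib Require Import Reals ZArith.
Set Implicit Arguments. Unset Strict Implicit. Unset Printing Implicit Defensive.

Lemma next_prime_ex (m : nat) : exists p, (m < p) && prime p.
Proof. case: (prime_above m) => q H1 H2; exists q; by rewrite H1 H2. Qed.

Definition next_prime (m : nat) : nat := ex_minn (next_prime_ex m).

(* p_i = i-th prime, 1-indexed: p 1 = 2, p 2 = 3, ...  (p 0 = 1 is a dummy) *)
Definition p (i : nat) : nat := ssrnat.iter i next_prime 1.

Definition smoothb (y : R) (n : nat) : bool :=
  all (fun q => if Rle_dec (INR q) y then true else false) (primes n).

Definition Psi (x y : R) : nat :=
  count (smoothb y) (iota 1 (Z.to_nat (Int_part x))).

(* Main.v *)
Require Import Defs.
From mathcomp Require Import all_boot.
From Stdlib Require Import Reals Lra.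
From Stdlib Require ZArith.
From mathcomp Require Import zify.

Lemma next_prime_spec m :
  (m < next_prime m)%N /\ prime (next_prime m) /\
  forall r, (m < r)%N -> prime r -> (next_prime m <= r)%N.
Proof.
rewrite /next_prime; case: ex_minnP => n /andP[H1 H2] Hmin.
split=> //; split=> // r Hr Pr; apply: Hmin; by rewrite Hr Pr.
Qed.

Lemma p_succ i : p i.+1 = next_prime (p i).
Proof. by rewrite /p iterS. Qed.

Lemma p_ge i : (i <= p i)%N.
Proof.
elim: i => [|i IH] //; rewrite p_succ.
have [H _] := next_prime_spec (p i); lia.
Qed.

Lemma p_prime i : (0 < i)%N -> prime (p i).
Proof. case: i => [|i] // _; rewrite p_succ; by have [_ [H _]] := next_prime_spec (p i). Qed.

Lemma nat_above (r : R) : (0 <= r)%R -> exists n : nat, (r <= INR n <= r + 1)%R.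
Proof.
move=> Hr; have [H1 H2] := archimed r.
have Hz : (0 <= up r)%Z.
  apply: Z.lt_le_incl; apply: lt_IZR; simpl; lra.
exists (Z.to_nat (up r)); rewrite INR_IZR_INZ Znat.Z2Nat.id //; lra.
Qed.

Lemma nat_above' (r : R) : exists n : nat, (r <= INR n)%R.
Proof.
have [n Hn] := @nat_above (Rmax r 0) (Rmax_r r 0); exists n.
have := Rmax_l r 0; lra.
Qed.
Lemma floor_nat (n M : nat) (r : R) : (0 <= r <= INR M)%R ->
  exists d, (d <= M)%N /\ Z.to_nat (Int_part (INR n + r)) = (n + d)%N.
Proof.
move=> Hr; have [H1 H2] := base_Int_part (INR n + r).
set F := Int_part _ in H1 H2 *.
have HA : (Z.of_nat n < F + 1)%Z.
  apply: lt_IZR; rewrite -INR_IZR_INZ plus_IZR; simpl; lra.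
have HB : (F <= Z.of_nat (n + M))%Z.
  apply: le_IZR; rewrite -INR_IZR_INZ -plusE plus_INR; lra.
exists (Z.to_nat F - n)%N; split; lia.
Qed.

Lemma Psi_diff (n M : nat) (r y : R) : (0 <= r <= INR M)%R ->
  (INR (Psi (INR n + r) y) - INR (Psi (INR n) y) <=
   INR (count (smoothb y) (iota n.+1 M)))%R.
Proof.
move=> Hr; rewrite /Psi.
have [d [Hd ->]] := @floor_nat n M r Hr.
have [d0 [Hd0 E0]] := @floor_nat n 0 0 (conj (Rle_refl 0) (Rle_refl 0)).
rewrite Rplus_0_r in E0.
rewrite E0 iotaD count_cat.
have -> : (n + d0 = n)%N by lia.
have -> : (1 + n = n.+1)%N by lia.
have -> : M = (d + (M - d))%N by lia.
rewrite iotaD count_cat -!plusE !plus_INR.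
set w := INR (count _ (iota _ (M - d))). have : (0 <= w)%R by apply: pos_INR. lra.
Qed.

Lemma smoothb_mono (y1 y2 : R) n : (y1 <= y2)%R -> smoothb y1 n -> smoothb y2 n.
Proof.
move=> Hy /allP H; apply/allP => q Hq; have := H q Hq.
case: (Rle_dec (INR q) y2) => // Hn; case: (Rle_dec (INR q) y1) => // Ha; lra.
Qed.
Lemma INR_addn (x y : nat) : INR (x + y)%N = (INR x + INR y)%R.
Proof. exact: plus_INR. Qed.

Lemma count_blocks (a : pred nat) m M T (v : R) :
  (forall t, (t < T)%N -> (v <= INR (count a (iota (m + t * M) M)))%R) ->
  (INR T * v <= INR (count a (iota m (T * M))))%R.
Proof.
elim: T => [|T IH] H.
  rewrite Rmult_0_l; exact: pos_INR.
have -> : (T.+1 * M = T * M + M)%N by lia.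
rewrite iotaD count_cat INR_addn S_INR.
have H1 := IH (fun t Ht => H t (ltnW Ht)).
have H2 := H T (ltnSn T).
lra.
Qed.

Lemma grimm_bound q k L Mn (P : nat -> nat) :
 (L <= k)%N ->
 (forall i, (1 <= i <= k)%N -> prime (P i) /\ (P i %| q + i)%N) ->
 (forall i j, (1 <= i <= k)%N -> (1 <= j <= k)%N -> P i = P j -> i = j) ->
 (count (smoothb (INR Mn)) (iota q.+1 L) <= Mn.+1)%N.
Proof.
move=> HL HP Hinj.
rewrite -size_filter.
set s := filter _ _.
have Hs : forall m, m \in s -> (q < m <= q + L)%N /\ smoothb (INR Mn) m.
  move=> m; rewrite mem_filter mem_iota => /andP[-> /andP[H1 H2]]; split=> //; lia.
rewrite -(size_map (fun m => P (m - q))) -(size_iota 0 Mn.+1).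
apply: uniq_leq_size.
  rewrite map_inj_in_uniq ?filter_uniq ?iota_uniq //.
  move=> m1 m2 /Hs[H1 _] /Hs[H2 _] E.
  have : (m1 - q = m2 - q)%N by apply: Hinj => //; lia.
  lia.
move=> x /mapP[m /Hs [Hm Hsm] ->].
rewrite mem_iota.
have [Pp Pd] : prime (P (m - q)) /\ (P (m - q) %| q + (m - q))%N by apply: HP; lia.
have Hmem : P (m - q) \in primes m.
  have Em : (q + (m - q) = m)%N by lia.
  rewrite Em in Pd; rewrite mem_primes Pp Pd andbT /=; lia.
move/allP: Hsm => /(_ _ Hmem).
case: Rle_dec => // Hle _.
have := INR_le _ _ Hle; lia.
Qed.

Lemma INR_muln (x y : nat) : INR (x * y)%N = (INR x * INR y)%R.
Proof. exact: mult_INR. Qed.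

Lemma Rpower_pos x y : (0 < Rpower x y)%R.
Proof. rewrite /Rpower; exact: exp_pos. Qed.

Theorem corollary1p1 :
  (* Grimm's conjecture *)
  (forall n k : nat, (1 <= n)%N -> (1 <= k)%N ->
     (forall i : nat, (1 <= i <= k)%N -> (1 < n + i)%N /\ ~~ prime (n + i)) ->
     exists P : nat -> nat,
       (forall i : nat, (1 <= i <= k)%N -> prime (P i) /\ (P i %| n + i)%N) /\
       (forall i j : nat, (1 <= i <= k)%N -> (1 <= j <= k)%N -> P i = P j -> i = j)) ->
  (* smooth numbers in short intervals *)
  (forall eps : R, (0 < eps)%R ->
     exists c : R, (0 < c)%R /\
       exists X : R, forall x : R, (X <= x)%R ->
         (INR (Psi (x + Rpower x eps) (Rpower x eps))
          - INR (Psi x (Rpower x eps)) >= c * Rpower x eps)%R) ->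
  forall eps : R, (0 < eps)%R ->
    exists N : nat, forall i : nat, (N <= i)%N ->
      (INR (p i.+1) - INR (p i) < Rpower (INR (p i)) eps)%R.
Proof.
move=> Grimm Smooth eps Heps.
set del := (Rmin eps 1 / 2)%R.
have Hm0 := Rmin_pos eps 1 Heps Rlt_0_1.
have Hm1 := Rmin_l eps 1. have Hm2 := Rmin_r eps 1.
have Hd0 : (0 < del)%R by rewrite /del; lra.
have Hd1 : (2 * del <= 1)%R by rewrite /del; lra.
have Hd2 : (2 * del <= eps)%R by rewrite /del; lra.
have [c [Hc [X HX]]] := Smooth del Hd0.
have [T HT] := nat_above' (3 / c).
have HTc : (3 <= INR T * c)%R.
  have := Rmult_le_compat_r c _ _ (Rlt_le _ _ Hc) HT.
  have -> : (3 / c * c = 3)%R by field; lra.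
  done.
set B := Rmax 3 (2 * INR T + 2).
have HB1 : (3 <= B)%R := Rmax_l _ _. have HB2 : (2 * INR T + 2 <= B)%R := Rmax_r _ _.
have [N0 HN0] := nat_above' (Rmax (Rmax X 2) (Rpower B (/ del))).
have HQ1 := Rmax_l (Rmax X 2) (Rpower B (/ del)).
have HQ2 := Rmax_r (Rmax X 2) (Rpower B (/ del)).
have HQ3 := Rmax_l X 2. have HQ4 := Rmax_r X 2.
exists N0.+1 => i Hi.
rewrite p_succ.
set q := p i.
have [Hqq' [Pq' Hmin]] := next_prime_spec q.
set q' := next_prime q.
have Hqi : (INR N0 <= INR q)%R.
  apply: le_INR; apply/leP; have := p_ge i; rewrite -/q; lia.
have Hq2 : (2 <= INR q)%R by lra.
have HqX : (X <= INR q)%R by lra.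
have HqB : (Rpower B (/ del) <= INR q)%R by lra.
set u := Rpower (INR q) del.
have Hu : (B <= u)%R.
  have -> : B = Rpower (Rpower B (/ del)) del.
    rewrite Rpower_mult Rinv_l; last lra.
    rewrite Rpower_1 //; lra.
  apply: Rle_Rpower_l; first lra.
  split=> //; exact: Rpower_pos.
have Huu : (u * u = Rpower (INR q) (2 * del))%R.
  by rewrite /u -Rpower_plus; congr Rpower; ring.
have Huq : (u * u <= INR q)%R.
  rewrite Huu; rewrite -{2}(Rpower_1 (INR q)); last lra.
  apply: Rle_Rpower; lra.
apply: (Rlt_le_trans _ (u * u)).
2:{ rewrite Huu; apply: Rle_Rpower; lra. }
apply: Rnot_le_lt => Hgap.
have [M [HM1 HM2]] := @nat_above (2 * u) ltac:(lra).
set k := (q' - q.+1)%N.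
have Eq : q' = (k + q + 1)%N by rewrite /k; lia.
have Hk : (INR q' = INR k + INR q + 1)%R by rewrite Eq !INR_addn.
have HTM : (T * M <= k)%N.
  apply/leP; apply: INR_le; rewrite INR_muln.
  have := Rmult_le_compat_l (INR T) _ _ (pos_INR T) HM2.
  have := pos_INR T.
  nra.
have HTMq : (T * M <= q)%N.
  apply/leP; apply: INR_le; rewrite INR_muln.
  have := Rmult_le_compat_l (INR T) _ _ (pos_INR T) HM2.
  have := pos_INR T.
  nra.
have HT1 : (0 < T)%N.
  case: (posnP T) => [HT0|//]; rewrite HT0 /= in HTc; lra.
have HM0 : (0 < M)%N.
  case: (posnP M) => [HM00|//]; rewrite HM00 /= in HM1; lra.
have HTM0 : (0 < T * M)%N by rewrite muln_gt0 HT1 HM0.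
have Hqp : (1 < q)%N by apply: prime_gt1; apply: p_prime; lia.
have [P [HP Hinj]] : exists P : nat -> nat,
       (forall i : nat, (1 <= i <= k)%N -> prime (P i) /\ (P i %| q + i)%N) /\
       (forall i j : nat, (1 <= i <= k)%N -> (1 <= j <= k)%N -> P i = P j -> i = j).
  apply: Grimm; try lia.
  move=> j Hj; split; first lia.
  apply/negP => Pj; have := Hmin (q + j)%N ltac:(lia) Pj; lia.
have Hup := @grimm_bound q k (T * M) M P HTM HP Hinj.
have Hlow : (INR T * (c * u) <= INR (count (smoothb (INR M)) (iota q.+1 (T * M))))%R.
  apply: count_blocks => t Ht.
  have Htm : (t * M <= q)%N.
    apply: leq_trans HTMq; apply: leq_mul (ltnW Ht) (leqnn M).
  set xn := (q + t * M)%N.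
  have Hx1 : (INR q <= INR xn <= 2 * INR q)%R.
    rewrite /xn INR_addn; have := pos_INR (t * M).
    have : (INR (t * M) <= INR q)%R by apply: le_INR; apply/leP.
    lra.
  have HxX : (X <= INR xn)%R by lra.
  set r := Rpower (INR xn) del.
  have Hr1 : (u <= r)%R.
    apply: Rle_Rpower_l; lra.
  have Hr2 : (r <= INR M)%R.
    have H1 : (r <= Rpower (2 * INR q) del)%R by apply: Rle_Rpower_l; lra.
    rewrite -Rpower_mult_distr in H1; try lra.
    have H2 : (Rpower 2 del <= 2)%R.
      rewrite -{2}(Rpower_1 2); last lra.
      apply: Rle_Rpower; lra.
    have := Rpower_pos (INR q) del. rewrite -/u => H3.
    rewrite -/u in H1. nra.
  have Hr0 : (0 <= r)%R by apply: Rlt_le; apply: Rpower_pos.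
  have HXd := HX (INR xn) HxX.
  have Hdiff := @Psi_diff xn M r r (conj Hr0 Hr2).
  have Hsub : (count (smoothb r) (iota xn.+1 M) <= count (smoothb (INR M)) (iota xn.+1 M))%N.
    apply: sub_count => z; exact: smoothb_mono.
  have Hsub' := le_INR _ _ (elimT leP Hsub).
  have -> : (q.+1 + t * M = xn.+1)%N by rewrite /xn; lia.
  have : (c * u <= c * r)%R by apply: Rmult_le_compat_l; lra.
  rewrite -/r in HXd.
  lra.
have Hup' := le_INR _ _ (elimT leP Hup).
rewrite S_INR in Hup'.
have : (3 * u <= (INR T * c) * u)%R.
  apply: Rmult_le_compat_r; first lra. done.
have -> : (INR T * c * u = INR T * (c * u))%R by ring.
lra.
Qed.
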